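(* Let $n = 8k+5$ with $k \ge 0$ an integer, and let $M = \frac{3n-1}{2}$. Then every transposition $(2i-1,2i+1)\in S_M$ with $1 \le 2i-1$ and $2i+1 \le M$ can be obtained from $(1,3)$ by successive conjugation by $n$-crossing permutations over $S_M$; that is, it equals $g(1,3)g^{-1}$ for some $g$ that is a product of $n$-crossing permutations over $S_M$.
   Context: For integers $2\le n\le m$ and $1 \le j \le m-n+1$, the $n$-crossing permutation $\pi_j\in S_m$ is $\pi_j=(j,\,j+n-1)(j+1,\,j+n-2)\cdots$, i.e. the involution sending $i \mapsto 2j+n-1-i$ for $j\le i\le j+n-1$ and fixing all other elements of $\{1,\dots,m\}$. The $n$-crossing permutations over $S_m$ are $\pi_1,\dots,\pi_{m-n+1}$. *)

(* Defs.v *)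
From mathcomp Require Import all_boot all_order all_fingroup.
Set Implicit Arguments. Unset Strict Implicit. Unset Printing Implicit Defensive.

(* Points of {1,...,M} are represented by the ordinals of 'I_M via i |-> i-1. *)

(* tpermv M a b : the transposition (a, b) in S_M, with a, b given as
   1-based points of {1,...,M} (callers ensure 1 <= a, b <= M). *)
Definition tpermv (M a b : nat) : {perm 'I_M} :=
  match M as M0 return {perm 'I_M0} with
  | 0 => 1%g
  | m.+1 => tperm (inord a.-1 : 'I_m.+1) (inord b.-1)
  end.

(* The n-crossing permutation pi_j in S_M:
   pi_j = (j, j+n-1)(j+1, j+n-2)..., i.e. the product of the disjoint
   transpositions (j+t, j+n-1-t) for 0 <= t < floor(n/2);
   it sends i |-> 2j+n-1-i for j <= i <= j+n-1 and fixes the rest. *)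
Definition crossing (n M j : nat) : {perm 'I_M} :=
  (\prod_(t < n./2) tpermv M (j + t) (j + n - 1 - t))%g.

(* Main.v *)
Require Import Defs.
From mathcomp Require Import all_boot all_order all_fingroup zify.

Lemma prodE n m j (x : 'I_m.+1) h : 1 <= j -> j + n - 1 <= m.+1 -> h.*2 <= n ->
  (((\prod_(t < h) tpermv m.+1 (j + t) (j + n - 1 - t))%g : {perm 'I_m.+1}) x).+1 =
  if (j <= x.+1 < j + h) || (j + n - 1 - h < x.+1 <= j + n - 1)
  then 2 * j + n - 1 - x.+1 else x.+1.
Proof.
move=> j1 jn; elim: h => [|h IH] hn.
  by rewrite big_ord0 perm1; case: ifP => //; lia.
rewrite big_ord_recr /= permM.
have hn2 : 2 * h.+1 <= n by rewrite mul2n.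
have {IH} := IH (leq_trans (leqnSn _) (leq_trans (leqnSn _) hn)).
set y := fun_of_perm _ x => IH; clearbody y.
have iK : forall a, a < m.+1 -> val (inord a : 'I_m.+1) = a by move=> a; apply: inordK.
rewrite permE /=.
case: ifP => /eqP E1.
 move: (E1) => /(congr1 val); rewrite /= iK; last lia.
 move=> E1'. rewrite iK; last lia. clear E1.
 by move: IH; case: ifP => ?; case: ifP => ?; lia.
case: ifP => /eqP E2.
 move: (E2) => /(congr1 val); rewrite /= iK; last lia.
 move=> E2'. rewrite iK; last lia. clear E1 E2.
 by move: IH; case: ifP => ?; case: ifP => ?; lia.
have E1' : (y : nat) <> (j + h).-1  by move=> H; apply: E1; apply: val_inj; rewrite /= iK //; lia.
have E2' : (y : nat) <> (j + n - 1 - h).-1 by move=> H; apply: E2; apply: val_inj; rewrite /= iK //; lia.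
clear E1 E2.
by move: IH; case: ifP => ?; case: ifP => ?; lia.
Qed.

Lemma crossingE n m j (x : 'I_m.+1) : 1 <= j -> j + n - 1 <= m.+1 ->
  (crossing n m.+1 j x).+1 =
  if j <= x.+1 <= j + n - 1 then 2 * j + n - 1 - x.+1 else x.+1.
Proof.
move=> j1 jn; rewrite /crossing prodE //; last by rewrite -{2}(odd_double_half n) leq_addl.
have := odd_double_half n; rewrite -muln2.
by case: (odd n) => /= E; case: ifP => ?; case: ifP => ?; lia.
Qed.

Lemma step k j (x : 'I_(12 * k + 6).+1) : 1 <= j <= 4 * k + 3 ->
  (crossing (8 * k + 5) (12 * k + 6).+1 j x).+1 =
  if j <= x.+1 <= j + (8 * k + 5) - 1 then 2 * j + (8 * k + 5) - 1 - x.+1 else x.+1.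
Proof. move=> Hj; apply: crossingE; lia. Qed.

Ltac kill_if := repeat match goal with |- context [if ?b then _ else _] =>
   lazymatch b with context [if _ then _ else _] => fail | _ => let E := fresh in destruct b eqn:E end end.

Theorem lemma4p5 (k M i : nat) :
  M = (3 * (8 * k + 5) - 1) %/ 2 ->
  1 <= 2 * i - 1 -> 2 * i + 1 <= M ->
  exists s : seq nat,
    all (fun j => 1 <= j <= M - (8 * k + 5) + 1) s /\
    tpermv M (2 * i - 1) (2 * i + 1)
    = ((tpermv M 1 3) ^ (\prod_(j <- s) crossing (8 * k + 5) M j))%g.
Proof.
move=> HM h1 h2.
have {}HM : M = (12 * k + 6).+1.
  rewrite HM; lia.
subst M.
have iK : forall a, a < (12 * k + 6).+1 -> val (inord a : 'I_(12 * k + 6).+1) = a.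
  by move=> a; apply: inordK.
case: (leqP (2 * i - 1) (8 * k + 5)) => hT.
- exists [:: 1; i]; split; first by rewrite /=; lia.
  rewrite !big_cons big_nil mulg1 conjgM /tpermv !tpermJ.
  congr tperm; apply: val_inj; apply: succn_inj; rewrite /= !step ?inordK; try lia; kill_if; lia.
- exists [:: 1; 8 * k + 5 - i; 4 * k + 3]; split.
    by rewrite /=; lia.
  rewrite !big_cons big_nil mulg1 !conjgM /tpermv !tpermJ tpermC.
  congr tperm; apply: val_inj; apply: succn_inj; rewrite /= !step ?inordK; try lia; kill_if; lia.
Qed.
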